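(* For all $n\ge 0$ and $k\ge 0$: if $k\equiv 0$ or $3\pmod 4$ then $L(n,k)=e(n,k)$, and if $k\equiv 1$ or $2\pmod 4$ then $L(n,k)=o(n,k)$.
   Context: $e(n,k)$ (resp. $o(n,k)$) is the number of $k$-element subsets of $\{1,\dots,n\}$ whose sum of elements is even (resp. odd); the empty set counts as even. Losanitsch's triangle $(L(n,k))_{n,k\ge 0}$ is defined by $L(0,k)=[k=0]$, $L(1,k)=[k\le 1]$ for $k\ge0$, $L(n,k)=0$ for $k<0$, and for $n\ge 2$ and all $k$: $L(n,k)=L(n-2,k)+\binom{n-2}{k-1}+L(n-2,k-2)$, where $\binom{m}{j}=0$ for $j<0$ or $j>m$. *)

(* Defs.v *)
From mathcomp Require Import all_boot.
Set Implicit Arguments. Unset Strict Implicit. Unset Printing Implicit Defensive.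

(* Elements of {1,...,n} are represented by i : 'I_n standing for i+1. *)
Definition subset_sum n (A : {set 'I_n}) : nat := \sum_(i in A) i.+1.

Definition e_cnt (n k : nat) : nat :=
  #|[set A : {set 'I_n} | (#|A| == k) && ~~ odd (subset_sum A)]|.

Definition o_cnt (n k : nat) : nat :=
  #|[set A : {set 'I_n} | (#|A| == k) && odd (subset_sum A)]|.

Fixpoint losanitsch (n k : nat) {struct n} : nat :=
  match n with
  | 0 => (k == 0)
  | 1 => (k <= 1)
  | m.+2 =>
      losanitsch m k
      + (if k is k'.+1 then 'C(m, k') else 0)
      + (if k is k''.+2 then losanitsch m k'' else 0)
  end.

(* Main.v *)
Require Import Defs.
From mathcomp Require Import all_boot.

Definition cc n k b := \sum_(A : {set 'I_n}) ((#|A| == k) && (odd (subset_sum A) == b)).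

Lemma card_sumE (T : finType) (P : pred T) : #|[set x | P x]| = \sum_x (P x : nat).
Proof.
rewrite -sum1_card big_mkcond /=; apply: eq_bigr => x _; rewrite inE; by case: (P x).
Qed.

Section Rec.
Variable n : nat.
Let w : 'I_n -> 'I_n.+1 := widen_ord (leqnSn n).
Lemma w_inj : injective w.
Proof. move=> i j H; apply: val_inj; exact: (congr1 val H). Qed.
Lemma max_notin (B : {set 'I_n}) : ord_max \notin w @: B.
Proof.
apply/imsetP => -[i _] /(congr1 val) /= E.
by move: (ltn_ord i); rewrite -E ltnn.
Qed.
Definition hh (p : {set 'I_n} * bool) : {set 'I_n.+1} :=
  if p.2 then ord_max |: (w @: p.1) else w @: p.1.
Definition gg (A : {set 'I_n.+1}) : {set 'I_n} * bool :=
  ([set i | w i \in A], ord_max \in A).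
Lemma ord_cases (x : 'I_n.+1) : x = ord_max \/ exists i, x = w i.
Proof.
case: (ltnP x n) => H.
  by right; exists (Ordinal H); apply: val_inj.
left; apply: val_inj => /=; have := ltn_ord x; rewrite ltnS => H2.
by apply/eqP; rewrite eqn_leq H H2.
Qed.
Lemma w_neq_max i : (w i == ord_max) = false.
Proof. apply/negbTE; apply/negP => /eqP E; have := max_notin [set i]; by rewrite -E imset_f ?set11. Qed.

Lemma hh_bij : bijective hh.
Proof.
exists gg.
  case=> B b; rewrite /gg /hh; case: b => /=; congr pair.
  - by apply/setP => i; rewrite !inE w_neq_max mem_imset //; exact: w_inj.
  - by rewrite !inE eqxx.
  - by apply/setP => i; rewrite !inE mem_imset //; exact: w_inj.
  - by apply/negbTE/max_notin.
move=> A; rewrite /gg /hh /=; apply/setP => x.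
case: (ord_cases x) => [->|[i ->]].
  case: ifP => H; first by rewrite !inE eqxx.
  by rewrite (negbTE (max_notin _)).
case: ifP => _; rewrite ?inE ?w_neq_max /= mem_imset ?inE //; exact: w_inj.
Qed.

Lemma hh_card p : #|hh p| = #|p.1| + p.2.
Proof.
case: p => B [] /=; rewrite /hh /=.
  by rewrite cardsU1 max_notin card_imset ?addn1 //; exact: w_inj.
by rewrite card_imset ?addn0 //; exact: w_inj.
Qed.

Lemma hh_sum p : subset_sum (hh p) = subset_sum p.1 + p.2 * n.+1.
Proof.
have E : subset_sum (w @: p.1) = subset_sum p.1.
  by rewrite /subset_sum big_imset //; move=> i j _ _; exact: w_inj.
case: p E => B [] /= E; rewrite /hh /=.
  by rewrite /subset_sum big_setU1 ?max_notin //= -/(subset_sum _) E mul1n addnC.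
by rewrite E mul0n addn0.
Qed.

Lemma cc_rec k b : cc n.+1 k b = cc n k b + (if k is k'.+1 then cc n k' (b (+) odd n.+1) else 0).
Proof.
rewrite /cc (reindex hh) /=; last by apply: onW_bij; exact: hh_bij.
rewrite -(pair_big xpredT xpredT (fun B b' => ((#|hh (B, b')| == k) && (odd (subset_sum (hh (B, b'))) == b)) : nat)) /=.
rewrite (eq_bigr (fun B : {set 'I_n} => ((#|B| + 1 == k) && (odd (subset_sum B + n.+1) == b) : nat) + ((#|B| == k) && (odd (subset_sum B) == b) : nat))); last first.
  move=> B _; rewrite big_bool /= !hh_card !hh_sum /= mul1n mul0n !addn0.
  done.
rewrite big_split /= addnC; congr addn.
case: k => [|k]; first by rewrite big1 // => B _; rewrite addn1.
apply: eq_bigr => B _; rewrite addn1 eqSS oddD.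
by rewrite /=; case: (odd (subset_sum B)); case: (odd n); case: b.
Qed.
End Rec.

Lemma cc0 k b : cc 0 k b = (k == 0) && (b == false).
Proof.
rewrite /cc (big_pred1 set0) => [|A]; last first.
  by symmetry; apply/eqP/setP => -[].
by rewrite cards0 /subset_sum big_set0; case: k; case: b.
Qed.

Lemma cc_tot n k x : cc n k x + cc n k (~~ x) = 'C(n, k).
Proof.
have H : cc n k true + cc n k false = 'C(n, k).
  rewrite /cc -big_split /= -[in RHS](card_ord n) -card_draws card_sumE.
  apply: eq_bigr => A _; by case: (#|A| == k); case: (odd _).
by case: x => //=; rewrite addnC.
Qed.

Definition par k := (k %% 4 == 1) || (k %% 4 == 2).

Lemma parS2 k : par k.+2 = ~~ par k.
Proof.
rewrite /par -addn2 -modnDml.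
have := ltn_pmod k (isT : 0 < 4).
by case: (k %% 4) => [|[|[|[|m]]]].
Qed.

Lemma main n : (forall k, losanitsch n k = cc n k (par k)) /\
               (forall k, losanitsch n.+1 k = cc n.+1 k (par k)).
Proof.
elim: n => [|n [IH1 IH2]].
  split => k.
    by rewrite cc0; case: k.
  by rewrite cc_rec; case: k => [|[|k]]; rewrite ?cc0.
split => // k.
case: k => [|k].
  by rewrite /= cc_rec cc_rec -IH1 !addn0.
rewrite /= cc_rec cc_rec cc_rec -IH1 -!addnA; congr addn.
case: k => [|k].
  rewrite /= !addn0 -(cc_tot n 0 (par 1 (+) ~~ odd n)); congr addn; congr cc; by case: (odd n).
rewrite -(cc_tot n k.+1 (par k.+2 (+) ~~ odd n)) -addnA; congr addn.
congr addn.
  by congr cc; rewrite /=; case: (odd n); case: (par k.+2).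
rewrite IH1; congr cc; rewrite parS2 /=; by case: (odd n); case: (par k).
Qed.

Theorem mainTheorem3 (n k : nat) :
  ((k %% 4 == 0) || (k %% 4 == 3) -> losanitsch n k = e_cnt n k) /\
  ((k %% 4 == 1) || (k %% 4 == 2) -> losanitsch n k = o_cnt n k).
Proof.
have [H _] := main n; rewrite H /e_cnt /o_cnt !card_sumE /cc /par.
split => Hk.
  have -> : ((k %% 4 == 1) || (k %% 4 == 2)) = false.
    by move: Hk; case/orP => /eqP ->.
  by apply: eq_bigr => A _; case: (odd _).
rewrite Hk; by apply: eq_bigr => A _; case: (odd _).
Qed.
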